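(* Let $f,f_0$ be probability densities on $[0,1]$ with $f_0$ bounded. Let $g\in L^\infty[0,1]$ and $C_1,C_2>0$ be such that $h(f,f_0)\|g\|_\infty\le C_1$ and $\|g\|_2\le C_2$. Then $$\Big|\int_0^1g^2(f-f_0)\Big|\le C_1^2+C_1\sqrt{4C_2^2\|f_0\|_\infty+C_1^2}.$$
   Context: $h$ is the Hellinger distance, $h(f,f_0)^2=\int_0^1(\sqrt f-\sqrt{f_0})^2$. $\|\cdot\|_2$ and $\|\cdot\|_\infty$ are the $L^2[0,1]$ and sup norms. *)

(* Defs.v *)
From HB Require Import structures.
From mathcomp Require Import all_boot all_order all_algebra.
From mathcomp Require Import all_classical all_reals all_analysis.
Set Implicit Arguments. Unset Strict Implicit. Unset Printing Implicit Defensive.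
Import Order.TTheory GRing.Theory Num.Theory.
Import numFieldNormedType.Exports.
Local Open Scope classical_set_scope.
Local Open Scope ring_scope.

Section Defs.
Variable R : realType.

Definition I01 : set R := `[0%R, 1%R].

Lemma measurable_I01 : measurable I01.
Proof. exact: measurable_itv. Qed.

Definition leb01 := mrestr (@lebesgue_measure R) measurable_I01.

Definition is_density01 (f : R -> R) : Prop :=
  measurable_fun I01 f /\ (forall x, I01 x -> 0 <= f x) /\
  (\int[@lebesgue_measure R]_(x in I01) (f x)%:E = 1)%E.

Definition hellinger (f f0 : R -> R) : R :=
  Num.sqrt (fine (\int[@lebesgue_measure R]_(x in I01)
                    ((Num.sqrt (f x) - Num.sqrt (f0 x)) ^+ 2)%:E)).

Definition norm2_01 (g : R -> R) : \bar R := Lnorm leb01 2%:E (EFin \o g).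
Definition normoo_01 (g : R -> R) : \bar R := Lnorm leb01 +oo%E (EFin \o g).
End Defs.

(* Main.v *)
Require Import Defs.
From HB Require Import structures.
From mathcomp Require Import all_boot all_order all_algebra.
From mathcomp Require Import all_classical all_reals all_analysis.
From mathcomp Require Import ring lra ess_sup_inf measurable_realfun.
Import Order.TTheory GRing.Theory Num.Theory.
Import numFieldNormedType.Exports.
Local Open Scope classical_set_scope.
Local Open Scope ring_scope.

Section Helpers.
Context (R : realType).
Local Notation mu := (@lebesgue_measure R).
Local Open Scope ereal_scope.

Lemma leb01T : @leb01 R setT = 1.
Proof.
rewrite /leb01 /mrestr setTI /I01 lebesgue_measure_itv/= lte_fin ltr01.
by rewrite -EFinB subr0.
Qed.

Lemma ae01 (P Q : R -> Prop) : (forall x, (@I01 R) x -> P x -> Q x) ->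
  (\forall x \ae @leb01 R, P x) ->
  {ae mu, forall x, (@I01 R) x -> Q x}.
Proof.
move=> PQ [N [mN N0 sub]]; exists (N `&` (@I01 R)); split.
- exact: measurableI mN (@measurable_I01 R).
- exact: N0.
- move=> x /= /not_implyP [Ix nQx]; split => //; apply: sub => /= Px.
  exact/nQx/PQ.
Qed.

Lemma nnint_le d (T : measurableType d) (nu : {measure set T -> \bar R}) (f g : T -> \bar R) :
  (forall x, 0 <= f x) -> (forall x, f x <= g x) ->
  \int[nu]_x f x <= \int[nu]_x g x.
Proof.
move=> f0 fg; rewrite !ge0_integralTE //; last by move=> x; exact: le_trans (f0 x) (fg x).
apply: ge_ereal_sup => _ [h hf <-]; apply: ereal_sup_ubound; exists h => //.
by move=> x; exact: le_trans (hf x) (fg x).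
Qed.

Lemma int_leb01 (phi : R -> \bar R) : (forall x, 0 <= phi x) ->
  \int[mu]_(x in (@I01 R)) phi x <= \int[@leb01 R]_x phi x.
Proof.
move=> p0.
rewrite (@eq_measure_integral _ _ _ _ (@leb01 R) mu); last first.
  by move=> A mA AI; rewrite /leb01/= /mrestr setIidl.
rewrite integral_mkcond; apply: nnint_le.
  by move=> x; rewrite /patch; case: ifP.
by move=> x; rewrite /patch; case: ifP.
Qed.


Lemma normoo_ae (g : R -> R) : normoo_01 g < +oo ->
  {ae mu, forall x, (@I01 R) x -> (`|g x| <= fine (normoo_01 g))%R}.
Proof.
move=> gfin.
have ge0 : 0 <= normoo_01 g by exact: Lnorm_ge0.
have Hn : normoo_01 g = ess_sup (@leb01 R) (abse \o (EFin \o g)).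
  have lt : 0 < @leb01 R setT by rewrite leb01T.
  by rewrite /normoo_01 unlock lt.
have := ess_sup_ge (@leb01 R) (abse \o (EFin \o g)).
rewrite -Hn -[normoo_01 g]fineK ?ge0_fin_numE//.
apply: ae01 => x Ix /=.
by rewrite lee_fin.
Qed.


Lemma norm2_bound (g : R -> R) (C2 : R) : norm2_01 g <= C2%:E -> (0 <= C2)%R ->
  \int[mu]_(x in (@I01 R)) (g x ^+ 2)%:E <= (C2 ^+ 2)%:E.
Proof.
move=> h C0.
apply: le_trans (int_leb01 (fun x => (g x ^+ 2)%:E) _) _.
  by move=> x; rewrite lee_fin sqr_ge0.
have E : \int[@leb01 R]_x (g x ^+ 2)%:E = norm2_01 g `^ 2.
  rewrite /norm2_01 poweR_Lnorm ?pnatr_eq0//; apply: eq_integral => x _.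
  by rewrite /= -[2%R]/(2%:R) powR_mulrn ?real_normK ?num_real.
rewrite E.
have := @gt0_ler_poweR R 2 ltac:(by []) (norm2_01 g) (C2%:E).
rewrite !in_itv/= Lnorm_ge0 lee_fin C0 !leey => /(_ isT isT h).
by rewrite /= -[2%R]/(2%:R) powR_mulrn.
Qed.


Lemma ae_mono (P Q : R -> Prop) : (forall x, P x -> Q x) ->
  {ae mu, forall x, P x} -> {ae mu, forall x, Q x}.
Proof.
move=> PQ [N [mN N0 sub]]; exists N; split => // x /= nQ; apply: sub => /= /PQ.
exact: nQ.
Qed.

Local Close Scope ereal_scope.

Lemma core (d b t s : R) : 0 < t -> t * s = 1 ->
  `|d ^+ 2 + 2 * d * b| <= (1 + t) * d ^+ 2 + s * b ^+ 2.
Proof.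
move=> t0 ts.
have s0 : 0 < s.
  have : 0 < t * s by rewrite ts.
  by rewrite pmulr_rgt0.
have e : s * (t * d - b) ^+ 2 = (t * s) * (t * d ^+ 2) - 2 * (t * s) * (d * b) + s * b ^+ 2.
  by ring.
rewrite ts !mul1r in e.
have e2 : s * (t * d + b) ^+ 2 = (t * s) * (t * d ^+ 2) + 2 * (t * s) * (d * b) + s * b ^+ 2.
  by ring.
rewrite ts !mul1r in e2.
have p1 : 0 <= s * (t * d - b) ^+ 2 by rewrite mulr_ge0 ?sqr_ge0 ?ltW.
have p2 : 0 <= s * (t * d + b) ^+ 2 by rewrite mulr_ge0 ?sqr_ge0 ?ltW.
rewrite ler_norml; apply/andP; split; nra.
Qed.

Lemma final_alg (C1 C2 M : R) : 0 < C1 -> 0 < C2 -> 0 <= M ->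
  exists t s, [/\ 0 < t, t * s = 1 &
    (1 + t) * C1 ^+ 2 + s * (M * C2 ^+ 2) <=
      C1 ^+ 2 + C1 * Num.sqrt (4 * C2 ^+ 2 * M + C1 ^+ 2)].
Proof.
move=> C1p C2p M0.
set S := Num.sqrt _.
have Sp : 0 < S.
  rewrite sqrtr_gt0; have : 0 <= 4 * C2 ^+ 2 * M by rewrite mulr_ge0 // mulr_ge0 // sqr_ge0.
  have : 0 < C1 ^+ 2 by rewrite exprn_gt0.
  lra.
have S2 : S ^+ 2 = 4 * C2 ^+ 2 * M + C1 ^+ 2.
  rewrite sqr_sqrtr //.
  have : 0 <= 4 * C2 ^+ 2 * M by rewrite mulr_ge0 // mulr_ge0 // sqr_ge0.
  have : 0 <= C1 ^+ 2 by rewrite sqr_ge0.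
  lra.
exists (S / (2 * C1)), (2 * C1 / S); split.
- by rewrite divr_gt0 // mulr_gt0.
- field; apply/andP; split; rewrite gt_eqF //.
- have e1 : S / (2 * C1) * C1 ^+ 2 = S * C1 / 2.
    by field; rewrite gt_eqF.
  have e2 : 2 * C1 / S * (M * C2 ^+ 2) = 2 * C1 * (M * C2 ^+ 2) / S.
    by field; rewrite gt_eqF.
  rewrite mulrDl mul1r e1 e2.
  have key : 2 * C1 * (M * C2 ^+ 2) / S <= C1 * S / 2.
    rewrite ler_pdivrMr //.
    have -> : C1 * S / 2 * S = C1 * S ^+ 2 / 2 by ring.
    rewrite S2.
    have : 0 <= C1 * C1 ^+ 2 by rewrite mulr_ge0 ?sqr_ge0 ?ltW.
    lra.
  lra.
Qed.

End Helpers.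

Local Close Scope ereal_scope.

Theorem lemma6 (R : realType) (f f0 g : R -> R) (C1 C2 : R) :
  is_density01 f -> is_density01 f0 ->
  (normoo_01 f0 < +oo)%E ->
  measurable_fun (@I01 R) g -> (normoo_01 g < +oo)%E ->
  0 < C1 -> 0 < C2 ->
  ((hellinger f f0)%:E * normoo_01 g <= C1%:E)%E ->
  (norm2_01 g <= C2%:E)%E ->
  `| Rintegral (@lebesgue_measure R) (@I01 R) (fun x => g x ^+ 2 * (f x - f0 x)) |
    <= C1 ^+ 2 + C1 * Num.sqrt (4 * C2 ^+ 2 * fine (normoo_01 f0) + C1 ^+ 2).
Proof.
move=> [mf [f_ge0 f_int]] [mf0 [f0_ge0 f0_int]] f0oo mg goo C1p C2p hg n2.
set mu := @lebesgue_measure R.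
set I := @I01 R.
have mI : measurable I := @measurable_I01 R.
set N := fine (normoo_01 g).
set M := fine (normoo_01 f0).
have N0 : (0 <= N)%R by rewrite fine_ge0 // Lnorm_ge0.
have M0 : (0 <= M)%R by rewrite fine_ge0 // Lnorm_ge0.
have hN := @normoo_ae R g goo.
have hM := @normoo_ae R f0 f0oo.
have hellN : (hellinger f f0 * N <= C1)%R.
  rewrite -lee_fin EFinM /N fineK //.
  by rewrite ge0_fin_numE // Lnorm_ge0.
have msq (F : R -> R) : measurable_fun I F -> measurable_fun I (fun x => Num.sqrt (F x)).
  move=> mF; exact: (measurableT_comp (measurable_realfun.continuous_measurable_fun (@sqrt_continuous R)) mF).
set U := fun x => (Num.sqrt (f x) - Num.sqrt (f0 x)) ^+ 2.
have mU : measurable_fun I U.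
  by apply: measurable_funX; apply: measurable_funB; apply: msq.
have U_ge0 x : (0 <= U x)%R by rewrite /U sqr_ge0.
have U_le x : I x -> (U x <= f x + f0 x)%R.
  move=> Ix; rewrite /U.
  have := sqr_sqrtr (f_ge0 x Ix); have := sqr_sqrtr (f0_ge0 x Ix).
  have := sqrtr_ge0 (f x); have := sqrtr_ge0 (f0 x).
  nra.
have IU_ge0 : (0 <= \int[mu]_(x in I) (U x)%:E)%E.
  by apply: integral_ge0 => x _; rewrite lee_fin.
have IU_le : (\int[mu]_(x in I) (U x)%:E <= 2%:E)%E.
  have H1 : (\int[mu]_(x in I) (U x)%:E <= \int[mu]_(x in I) ((f x)%:E + (f0 x)%:E))%E.
    apply: ge0_le_integral => //.
    all: try by move=> x _; rewrite lee_fin.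
    all: try by move=> x Ix; rewrite -EFinD lee_fin U_le.
    1: exact/measurable_EFinP.
    1: by apply: emeasurable_funD; apply/measurable_EFinP.
  apply: le_trans H1 _.
  rewrite ge0_integralD //.
  all: try by move=> x Ix; rewrite lee_fin ?f_ge0 ?f0_ge0.
  all: try exact/measurable_EFinP.
  by rewrite f_int f0_int -EFinD.
have IUE : (\int[mu]_(x in I) (U x)%:E = ((hellinger f f0) ^+ 2)%:E)%E.
  rewrite /hellinger sqr_sqrtr ?fine_ge0 // fineK //.
  rewrite ge0_fin_numE //; apply: le_lt_trans IU_le _; exact: ltry.
have hell0 : (0 <= hellinger f f0)%R by exact: sqrtr_ge0.
have mg2 : measurable_fun I (fun x => g x ^+ 2) by exact: measurable_funX.
have A_le : (\int[mu]_(x in I) (g x ^+ 2 * U x)%:E <= (C1 ^+ 2)%:E)%E.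
  have H1 : (\int[mu]_(x in I) (g x ^+ 2 * U x)%:E <=
             \int[mu]_(x in I) (N ^+ 2 * U x)%:E)%E.
    apply: ae_ge0_le_integral => //.
    all: try by move=> x _; rewrite lee_fin mulr_ge0 ?sqr_ge0.
    1: by apply/measurable_EFinP; exact: measurable_funM.
    1: by apply/measurable_EFinP; apply: measurable_funM => //; exact: measurable_cst.
    apply: ae_mono hN => x h Ix; rewrite lee_fin; apply: ler_wpM2r => //.
    have := h Ix; rewrite -[g x ^+ 2]real_normK ?num_real // => h'.
    by rewrite !expr2; apply: ler_pM => //.
  apply: le_trans H1 _.
  under eq_integral => x _ do rewrite EFinM.
  rewrite ge0_integralZl_EFin //; last by rewrite sqr_ge0.
  all: try by move=> x _; rewrite lee_fin.
  2: exact/measurable_EFinP.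
  rewrite IUE -EFinM lee_fin -exprMn mulrC !expr2.
  by apply: ler_pM => //; apply: mulr_ge0.
have B_le : (\int[mu]_(x in I) (g x ^+ 2 * f0 x)%:E <= (M * C2 ^+ 2)%:E)%E.
  have H1 : (\int[mu]_(x in I) (g x ^+ 2 * f0 x)%:E <=
             \int[mu]_(x in I) (M * g x ^+ 2)%:E)%E.
    apply: ae_ge0_le_integral => //.
    all: try by move=> x Ix; rewrite lee_fin mulr_ge0 ?sqr_ge0 ?f0_ge0.
    1: by apply/measurable_EFinP; exact: measurable_funM.
    1: by apply/measurable_EFinP; apply: measurable_funM => //; exact: measurable_cst.
    apply: ae_mono hM => x h Ix; rewrite lee_fin [M * _]mulrC; apply: ler_wpM2l; rewrite ?sqr_ge0 //.
    exact: le_trans (ler_norm _) (h Ix).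
  apply: le_trans H1 _.
  under eq_integral => x _ do rewrite EFinM.
  rewrite ge0_integralZl_EFin //.
  all: try by move=> x _; rewrite lee_fin sqr_ge0.
  2: exact/measurable_EFinP.
  rewrite EFinM lee_wpmul2l ?lee_fin //.
  exact: (@norm2_bound R g C2 n2 (ltW C2p)).
have [t [s [t0 ts fin]]] := @final_alg R C1 C2 M C1p C2p M0.
have s0 : (0 < s)%R.
  have : (0 < t * s)%R by rewrite ts.
  by rewrite pmulr_rgt0.
set h := fun x => (g x ^+ 2 * (f x - f0 x))%R.
have mh : measurable_fun I h.
  by apply: measurable_funM => //; apply: measurable_funB.
have pw x : I x -> (`|h x| <= (1 + t) * (g x ^+ 2 * U x) + s * (g x ^+ 2 * f0 x))%R.
  move=> Ix; rewrite /h normrM ger0_norm ?sqr_ge0 //.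
  have := @core R (Num.sqrt (f x) - Num.sqrt (f0 x)) (Num.sqrt (f0 x)) t s t0 ts.
  rewrite sqr_sqrtr ?f0_ge0 //.
  have ef : (f x - f0 x = (Num.sqrt (f x) - Num.sqrt (f0 x)) ^+ 2 +
      2 * (Num.sqrt (f x) - Num.sqrt (f0 x)) * Num.sqrt (f0 x))%R.
    rewrite -{1}(sqr_sqrtr (f_ge0 x Ix)) -{1}(sqr_sqrtr (f0_ge0 x Ix)).
    by ring.
  rewrite -ef => H.
  have -> : ((1 + t) * (g x ^+ 2 * U x) + s * (g x ^+ 2 * f0 x) =
     g x ^+ 2 * ((1 + t) * U x + s * f0 x))%R by ring.
  by apply: ler_wpM2l; rewrite ?sqr_ge0.
have mgU : measurable_fun I (fun x => (g x ^+ 2 * U x)%R) by exact: measurable_funM.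
have mgf0 : measurable_fun I (fun x => (g x ^+ 2 * f0 x)%R) by exact: measurable_funM.
have Ih : (\int[mu]_(x in I) `|h x|%:E <=
           ((1 + t) * C1 ^+ 2 + s * (M * C2 ^+ 2))%:E)%E.
  have H1 : (\int[mu]_(x in I) `|h x|%:E <=
     \int[mu]_(x in I) (((1 + t)%:E * (g x ^+ 2 * U x)%:E) + (s%:E * (g x ^+ 2 * f0 x)%:E)))%E.
    apply: ge0_le_integral => //.
    all: try by move=> x _; rewrite lee_fin normr_ge0.
    all: try by move=> x Ix; rewrite -!EFinM -EFinD lee_fin pw.
    1: by apply/measurable_EFinP; apply: measurableT_comp => //.
    apply: emeasurable_funD; apply: emeasurable_funM => //; try exact: measurable_cst.
    all: try exact/measurable_EFinP.
  have t1 : (0 <= 1 + t)%R by rewrite addr_ge0 // ltW.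
  have ha x : I x -> (0 <= (1 + t)%:E * (g x ^+ 2 * U x)%:E)%E.
    move=> _; rewrite -EFinM lee_fin; apply: mulr_ge0 => //.
    by apply: mulr_ge0; [exact: sqr_ge0|exact: U_ge0].
  have hb x : I x -> (0 <= s%:E * (g x ^+ 2 * f0 x)%:E)%E.
    move=> Ix; rewrite -EFinM lee_fin; apply: mulr_ge0; first exact: ltW.
    by apply: mulr_ge0; [exact: sqr_ge0|exact: f0_ge0].
  have ma : measurable_fun I (fun x => (1 + t)%:E * (g x ^+ 2 * U x)%:E)%E.
    by apply: emeasurable_funM; [exact: measurable_cst|exact/measurable_EFinP].
  have mb : measurable_fun I (fun x => s%:E * (g x ^+ 2 * f0 x)%:E)%E.
    by apply: emeasurable_funM; [exact: measurable_cst|exact/measurable_EFinP].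
  have ha' x : I x -> (0 <= (g x ^+ 2 * U x)%:E)%E.
    by move=> _; rewrite lee_fin mulr_ge0 ?sqr_ge0.
  have hb' x : I x -> (0 <= (g x ^+ 2 * f0 x)%:E)%E.
    by move=> Ix; rewrite lee_fin; apply: mulr_ge0; [exact: sqr_ge0|exact: f0_ge0].
  have ma' : measurable_fun I (fun x => (g x ^+ 2 * U x)%:E) by exact/measurable_EFinP.
  have mb' : measurable_fun I (fun x => (g x ^+ 2 * f0 x)%:E) by exact/measurable_EFinP.
  apply: le_trans H1 _.
  have s0' : (0 <= s)%R by exact: ltW.
  rewrite ge0_integralD // !ge0_integralZl_EFin //.
  rewrite (EFinD ((1 + t) * C1 ^+ 2)) (EFinM (1 + t)) (EFinM s); apply: leeD.
    by apply: lee_wpmul2l => //; rewrite lee_fin.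
  by apply: lee_wpmul2l => //; rewrite lee_fin.
have int_h : mu.-integrable I (EFin \o h).
  apply/integrableP; split; first exact/measurable_EFinP.
  by apply: le_lt_trans Ih _; exact: ltry.
rewrite -lee_fin EFin_normr_Rintegral //.
apply: le_trans (le_abse_integral _ _ _) _ => //.
  exact/measurable_EFinP.
apply: le_trans Ih _.
by rewrite lee_fin.
Qed.
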